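(* If $\mathbb{K}=(K,+,0)$ is a positive commutative monoid that is weakly cancellative and totally canonically pre-ordered, then the inner consistency property holds for $\mathbb{K}$-relations via the northwest corner method: for any two $\mathbb{K}$-relations $R(X)$, $S(Y)$ with $R[X\cap Y]=S[X\cap Y]$, the northwest corner procedure can be carried out and every northwest corner join $W$ for $R$ and $S$ satisfies $W[X]=R$ and $W[Y]=S$.
   Context: Positive: $p+q=0\Rightarrow p=q=0$. Canonical pre-order: $b\sqsubseteq c$ iff $b+a=c$ for some $a$. Weakly cancellative: $a+b=a+c$ implies $b=c$ or $b=0$ or $c=0$. Totally canonically pre-ordered: $b\sqsubseteq c$ or $c\sqsubseteq b$ for all $b,c$. $\mathbb{K}$-relations: for a finite attribute set $X$ (attributes have domains), a $\mathbb{K}$-relation over $X$ is a finitely supported map $R$ from $X$-tuples (assignments of domain values to attributes) to $K$, support $R'$; $t[Y]$ is restriction; marginals $R[Y](t)=\sum_{r\in R',r[Y]=t}R(r)$. Northwest corner method on a balanced instance $b\in K^m$, $c\in K^n$ ($\sum b_i=\sum c_j$), producing $x_{ij}\in K$: first, for each $i$ with $b_i=0$ set row $i$ of $x$ to $0$ and delete it, likewise for columns with $c_j=0$. If $m=1$ set $x_{1j}=c_j$; if $n=1$ set $x_{i1}=b_i$. Otherwise: if $b_1=c_1$, set $x_{11}=b_1$, the other entries of row 1 and column 1 to $0$, and recurse on $(b_2,\dots,b_m),(c_2,\dots,c_n)$; else if $b_1\sqsubseteq c_1$, choose $a$ with $b_1+a=c_1$, set $x_{11}=b_1$ and $x_{1j}=0$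 for $j\ge2$, and recurse on rows $2..m$ with $(b_2,\dots,b_m)$ and $(a,c_2,\dots,c_n)$; else ($c_1\sqsubseteq b_1$) symmetrically with rows and columns exchanged. A northwest corner join for inner consistent $R(X),S(Y)$ with $Z=X\cap Y$: for each $Z$-tuple $w$ in the support of $R[Z]$, enumerate in any order the $X$-tuples $u_1,\dots,u_p\in R'$ with $u_i[Z]=w$ and the $Y$-tuples $v_1,\dots,v_q\in S'$ with $v_j[Z]=w$, apply the method to $b=(R(u_i))_i$, $c=(S(v_j))_j$, and set $W(u_iv_j)=x_{ij}$ (where $u_iv_j$ is the $X\cup Y$-tuple agreeing with both); $W$ is $0$ on all other $X\cup Y$-tuples. *)

(* Defs.v *)
From HB Require Import structures.
From mathcomp Require Import all_boot.
From mathcomp Require Import finmap.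
From mathcomp Require Import boolp.

Set Implicit Arguments.
Unset Strict Implicit.
Unset Printing Implicit Defensive.

Local Open Scope fset_scope.
Local Open Scope fmap_scope.

Section Monoid.
Variables (K : Type) (add : K -> K -> K) (zero : K).

Definition comm_monoid : Prop :=
  [/\ forall a b c, add a (add b c) = add (add a b) c,
      forall a b, add a b = add b a &
      forall a, add zero a = a].

Definition positive_monoid : Prop :=
  forall p q, add p q = zero -> p = zero /\ q = zero.

Definition canon_le (b c : K) : Prop := exists a, add b a = c.

Definition weakly_cancellative : Prop :=
  forall a b c, add a b = add a c -> b = c \/ b = zero \/ c = zero.

Definition totally_canon_preordered : Prop :=
  forall b c, canon_le b c \/ canon_le c b.

Definition nz (k : K) : bool := `[< k <> zero >].

Definition sumK (s : seq K) : K := foldr add zero s.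

(* The northwest corner method.  Matrices x are given as functions         *)
(* nat -> nat -> K, indices 0-based (row i, column j); only entries with    *)
(* i < size b, j < size c are meaningful.                                   *)
(* [with_deletion P b c x] : the zero rows/columns of the instance (b,c)    *)
(* are set to 0 and deleted, and P is run on the remaining instance; the    *)
(* output x' of P is re-indexed into x.                                     *)
Definition with_deletion (P : seq K -> seq K -> (nat -> nat -> K) -> Prop)
  (b c : seq K) (x : nat -> nat -> K) : Prop :=
  exists x' : nat -> nat -> K,
    P (filter nz b) (filter nz c) x' /\
    forall i j, i < size b -> j < size c ->
      x i j = if nz (nth zero b i) && nz (nth zero c j)
              then x' (count nz (take i b)) (count nz (take j c))
              else zero.

(* [nwc_core b c x] : x is a possible output of the method on (b,c) after
   the deletion step (rules tried in the order of the paper). *)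
Inductive nwc_core : seq K -> seq K -> (nat -> nat -> K) -> Prop :=
| nwc_nil (x : nat -> nat -> K) : nwc_core [::] [::] x
| nwc_row (b c : seq K) (x : nat -> nat -> K) :
    size b = 1 ->
    (forall j, j < size c -> x 0 j = nth zero c j) ->
    nwc_core b c x
| nwc_col (b c : seq K) (x : nat -> nat -> K) :
    size b <> 1 -> size c = 1 ->
    (forall i, i < size b -> x i 0 = nth zero b i) ->
    nwc_core b c x
| nwc_eq (b1 c1 : K) (b' c' : seq K) (x : nat -> nat -> K) :
    (1 <= size b')%N -> (1 <= size c')%N ->
    b1 = c1 ->
    x 0 0 = b1 ->
    (forall j, j < size c' -> x 0 j.+1 = zero) ->
    (forall i, i < size b' -> x i.+1 0 = zero) ->
    with_deletion nwc_core b' c' (fun i j => x i.+1 j.+1) ->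
    nwc_core (b1 :: b') (c1 :: c') x
| nwc_le (b1 c1 a : K) (b' c' : seq K) (x : nat -> nat -> K) :
    (1 <= size b')%N -> (1 <= size c')%N ->
    b1 <> c1 ->
    add b1 a = c1 ->
    x 0 0 = b1 ->
    (forall j, j < size c' -> x 0 j.+1 = zero) ->
    with_deletion nwc_core b' (a :: c') (fun i j => x i.+1 j) ->
    nwc_core (b1 :: b') (c1 :: c') x
| nwc_ge (b1 c1 a : K) (b' c' : seq K) (x : nat -> nat -> K) :
    (1 <= size b')%N -> (1 <= size c')%N ->
    b1 <> c1 ->
    ~ canon_le b1 c1 ->
    add c1 a = b1 ->
    x 0 0 = c1 ->
    (forall i, i < size b' -> x i.+1 0 = zero) ->
    with_deletion nwc_core (a :: b') c' (fun i j => x i j.+1) ->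
    nwc_core (b1 :: b') (c1 :: c') x.

Definition nwc (b c : seq K) (x : nat -> nat -> K) : Prop :=
  with_deletion nwc_core b c x.

End Monoid.

(* K-relations.  Attributes range over a choiceType A, values over a       *)
(* choiceType V; an X-tuple is a finite map t : {fmap A -> V} with          *)
(* domf t = X, and t[Y] is the restriction t.[& Y].                          *)
Record krel (K : Type) (zero : K) (A V : choiceType) (X : {fset A}) := KRel {
  krel_fun :> {fmap A -> V} -> K;
  krel_supp : {fset {fmap A -> V}};
  krel_suppP : forall t, t \in krel_supp <-> krel_fun t <> zero;
  krel_dom : forall t, t \in krel_supp -> domf t = X
}.

Section KRel.
Variables (K : Type) (add : K -> K -> K) (zero : K) (A V : choiceType).

Definition marg (X : {fset A}) (R : krel zero V X) (Z : {fset A})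
    (t : {fmap A -> V}) : K :=
  \big[add/zero]_(r <- krel_supp R | r.[& Z] == t) R r.

(* For each
   Z-tuple w in the support of R[Z], us w / vs w enumerate (in some order)
   the tuples u in R' (resp. v in S') with u[Z] = w (resp. v[Z] = w),
   xs w is an output of the northwest corner method on
   (R(u_i))_i, (S(v_j))_j, W(u_i v_j) = (xs w) i j, and W is 0 on all
   other (X ∪ Y)-tuples. *)
Definition nw_join (X Y : {fset A}) (R : krel zero V X) (S : krel zero V Y)
    (W : krel zero V (X `|` Y)) : Prop :=
  let Z := X `&` Y in
  exists (us vs : {fmap A -> V} -> seq {fmap A -> V})
         (xs : {fmap A -> V} -> nat -> nat -> K),
    (forall w, marg R Z w <> zero ->
       [/\ uniq (us w), uniq (vs w),
           us w =i [seq u <- krel_supp R | u.[& Z] == w],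
           vs w =i [seq v <- krel_supp S | v.[& Z] == w] &
           nwc add zero [seq R u | u <- us w] [seq S v | v <- vs w] (xs w)])
    /\ (forall w i j, marg R Z w <> zero ->
          i < size (us w) -> j < size (vs w) ->
          W (nth [fmap] (us w) i + nth [fmap] (vs w) j) = xs w i j)
    /\ (forall t, ~ (exists w i j, [/\ marg R Z w <> zero,
                      i < size (us w), j < size (vs w) &
                      t = nth [fmap] (us w) i + nth [fmap] (vs w) j]) ->
          W t = zero).

End KRel.
Arguments marg : clear implicits.
Arguments marg {K} add {zero A V X} R Z t.
Arguments nw_join : clear implicits.
Arguments nw_join {K} add {zero A V X Y} R S W.

(* Main.v *)
Require Import Defs.
From HB Require Import structures.
From mathcomp Require Import all_boot.
From mathcomp Require Import finmap.
From mathcomp Require Import boolp.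
From mathcomp Require Import zify.

Set Implicit Arguments.
Unset Strict Implicit.
Unset Printing Implicit Defensive.

Section Mon.
Variables (K : Type) (add : K -> K -> K) (zero : K).
Hypothesis HK : comm_monoid add zero.
Hypothesis Hpos : positive_monoid add zero.
Hypothesis Hwc : weakly_cancellative add zero.
Hypothesis Htot : totally_canon_preordered add.

Local Notation sumK := (sumK add zero).
Local Notation nz := (nz zero).

Lemma addA a b c : add a (add b c) = add (add a b) c.
Proof. by case: HK. Qed.
Lemma addC a b : add a b = add b a.
Proof. by case: HK. Qed.
Lemma add0 a : add zero a = a.
Proof. by case: HK. Qed.
Lemma addr0 a : add a zero = a.
Proof. by rewrite addC add0. Qed.

Lemma nzP k : nz k <-> k <> zero.
Proof. by rewrite /Defs.nz; split => [/asboolP|?]; [|apply/asboolP]. Qed.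

Lemma nzF k : ~~ nz k -> k = zero.
Proof. by move=> H; apply: contrapT => /nzP; rewrite (negbTE H). Qed.

Fixpoint sig (f : nat -> K) n :=
  match n with 0 => zero | n'.+1 => add (f 0) (sig (fun j => f j.+1) n') end.

Lemma sig_ext f g n : (forall j, j < n -> f j = g j) -> sig f n = sig g n.
Proof.
elim: n f g => [//|n IH] f g H /=.
by rewrite H // (IH (fun j => f j.+1) (fun j => g j.+1)) // => j Hj; apply: H.
Qed.

Lemma sig_zero f n : (forall j, j < n -> f j = zero) -> sig f n = zero.
Proof.
elim: n f => [//|n IH] f H /=.
by rewrite H // add0 IH // => j Hj; apply: H.
Qed.

Lemma sig_map (T : Type) (d : T) (F : T -> K) s :
  sig (fun j => F (nth d s j)) (size s) = sumK (map F s).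
Proof. by elim: s => [//|a s IH] /=; rewrite IH. Qed.

Lemma sig_nth s : sig (fun j => nth zero s j) (size s) = sumK s.
Proof. by rewrite (sig_map zero id) map_id. Qed.

Lemma sumK_filter s : sumK (filter nz s) = sumK s.
Proof.
elim: s => [//|a s IH] /=; case: ifP => Ha /=; rewrite IH //.
by rewrite (nzF (negbT Ha)) add0.
Qed.

Lemma sumK_nz s : all nz s -> s <> [::] -> sumK s <> zero.
Proof.
case: s => [//|a s] /= /andP[/nzP Ha _] _ H.
by case: (Hpos H).
Qed.

Lemma sumK_eq0 (T : eqType) (F : T -> K) s :
  sumK (map F s) = zero -> forall x, x \in s -> F x = zero.
Proof.
elim: s => [//|a s IH] /= H x; rewrite inE => /orP[/eqP->|Hx].
  by case: (Hpos H).
by apply: IH => //; case: (Hpos H).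
Qed.

Lemma sumK_rem (T : eqType) (F : T -> K) s a : a \in s ->
  sumK (map F s) = add (F a) (sumK (map F (rem a s))).
Proof.
elim: s => [//|b s IH] /= Ha.
case: (eqVneq b a) => [->//|Hba].
rewrite /=.
have Ha' : a \in s by move: Ha; rewrite inE eq_sym (negbTE Hba).
by rewrite IH // !addA (addC (F b)).
Qed.

Lemma sum_eq_uniq (T : eqType) (F : T -> K) s1 s2 :
  uniq s1 -> uniq s2 -> s1 =i s2 -> sumK (map F s1) = sumK (map F s2).
Proof.
elim: s1 s2 => [|a s1 IH] s2 U1 U2 E.
  by case: s2 E U2 => [//|b s2] E; have := E b; rewrite inE eqxx.
have Ha : a \in s2 by rewrite -E inE eqxx.
rewrite (sumK_rem F Ha) /=; congr add.
move: U1 => /= /andP[Na U1]; apply: IH => //; first exact: rem_uniq.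
move=> x; rewrite mem_rem_uniq // inE -E inE.
by case: eqP => [->|]; [rewrite (negbTE Na)|].
Qed.

Lemma sumK_filterF (T : Type) (F : T -> K) s :
  sumK (map F [seq r <- s | nz (F r)]) = sumK (map F s).
Proof.
elim: s => [//|a s IH] /=; case: ifP => Ha /=; rewrite IH //.
by rewrite (nzF (negbT Ha)) add0.
Qed.

Lemma sum_eq_nz (T : eqType) (F : T -> K) s1 s2 :
  uniq s1 -> uniq s2 -> (forall r, F r <> zero -> (r \in s1) = (r \in s2)) ->
  sumK (map F s1) = sumK (map F s2).
Proof.
move=> U1 U2 E; rewrite -sumK_filterF -(sumK_filterF F s2).
apply: sum_eq_uniq; try exact: filter_uniq.
move=> r; rewrite !mem_filter; case: (boolP (nz (F r))) => //= /nzP Hr.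
exact: E.
Qed.

Lemma sig_reindex c g :
  sig (fun j => if nz (nth zero c j) then g (count nz (take j c)) else zero) (size c)
  = sig g (size (filter nz c)).
Proof.
elim: c g => [//|a c IH] g /=.
case: ifP => Ha /=.
  congr add.
  by rewrite -(IH (fun k => g k.+1)); apply: sig_ext => j _; rewrite add1n.
by rewrite add0 -IH; apply: sig_ext => j _; rewrite add0n.
Qed.

Lemma nth_filter_count b i : i < size b -> nz (nth zero b i) ->
  count nz (take i b) < size (filter nz b) /\
  nth zero (filter nz b) (count nz (take i b)) = nth zero b i.
Proof.
elim: b i => [//|a b IH] [|i] /=.
  by move=> _ ->.
move=> Hi Hn; have [H1 H2] := IH i Hi Hn.
by case: ifP => Ha /=; rewrite ?Ha /= ?add1n ?add0n.
Qed.


Definition good (b c : seq K) (x : nat -> nat -> K) :=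
  (forall i, i < size b -> sig (x i) (size c) = nth zero b i) /\
  (forall j, j < size c -> sig (fun i => x i j) (size b) = nth zero c j).

Lemma wd_good P b c x : with_deletion zero P b c x ->
  (forall x', P (filter nz b) (filter nz c) x' ->
     good (filter nz b) (filter nz c) x') -> good b c x.
Proof.
case=> x' [Px' Ex] Hg; have [Hr Hc] := Hg x' Px'; split.
  move=> i Hi; case: (boolP (nz (nth zero b i))) => Hb; last first.
    rewrite (nzF Hb); apply: sig_zero => j Hj.
    by rewrite Ex // (negbTE Hb).
  have [H1 H2] := nth_filter_count Hi Hb.
  rewrite (sig_ext (g := fun j => if nz (nth zero c j) then
      x' (count nz (take i b)) (count nz (take j c)) else zero)); last first.
    by move=> j Hj; rewrite Ex // Hb.
  by rewrite sig_reindex // Hr.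
move=> j Hj; case: (boolP (nz (nth zero c j))) => Hc'; last first.
  rewrite (nzF Hc'); apply: sig_zero => i Hi.
  by rewrite Ex // (negbTE Hc') andbF.
have [H1 H2] := nth_filter_count Hj Hc'.
rewrite (sig_ext (g := fun i => if nz (nth zero b i) then
    x' (count nz (take i b)) (count nz (take j c)) else zero)); last first.
  by move=> i Hi; rewrite Ex // Hc' andbT.
by rewrite (sig_reindex b (fun k => x' k (count nz (take j c)))) Hc.
Qed.

Lemma bal_tail b1 b' c' : all nz b' -> b' <> [::] -> c' <> [::] -> all nz c' ->
  add b1 (sumK b') = add b1 (sumK c') -> sumK b' = sumK c'.
Proof.
move=> Nb Eb Ec Nc /Hwc [//|[H|H]].
  by case: (sumK_nz Nb Eb).
by case: (sumK_nz Nc Ec).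
Qed.

Lemma core_good n b c x : size b + size c <= n -> all nz b -> all nz c ->
  sumK b = sumK c -> nwc_core add zero b c x -> good b c x.
Proof.
elim: n b c x => [|n IH] b c x Hs Nb Nc Bal H.
  by case: b c Hs {Nb Nc Bal H} => [|? ?] [|? ?] //; split.
have IHw : forall b c x, size b + size c <= n -> sumK b = sumK c ->
    with_deletion zero (nwc_core add zero) b c x -> good b c x.
  move=> b0 c0 x0 Hs0 Bal0 Hw; apply: (wd_good Hw) => xx Hx; apply: (IH _ _ _ _ _ _ _ Hx).
  - rewrite !size_filter; apply: leq_trans Hs0.
    by apply: leq_add; apply: count_size.
  - exact: filter_all.
  - exact: filter_all.
  - by rewrite !sumK_filter.
move: Hs Nb Nc Bal.
destruct H as [x0|b c x Hb Hx|b c x Hb Hc Hx|b1 c1 b' c' x Hb' Hc' E X00 Xr Xc Hw|b1 c1 a b' c' x Hb' Hc' Ne Ea X00 Xr Hw|b1 c1 a b' c' x Hb' Hc' Ne Nle Ea X00 Xc Hw].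
- by move=> _ _ _ _; split.
- move=> Hs Nb Nc Bal.
  case: b Hb Hs Nb Bal => [|b1 [|//]] // _ Hs Nb Bal; split.
    case=> [|//] _ /=.
    by rewrite (sig_ext (g := fun j => nth zero c j)) // sig_nth -Bal /= addr0.
  by move=> j Hj /=; rewrite Hx // addr0.
- move=> Hs Nb Nc Bal.
  case: c Hc Hs Nc Bal => [|c1 [|//]] // _ Hs Nc Bal; split.
    by move=> i Hi /=; rewrite Hx // addr0.
  case=> [|//] _ /=.
  by rewrite (sig_ext (g := fun i => nth zero b i)) // sig_nth Bal /= addr0.
- move=> Hs Nb Nc Bal.
  subst c1.
  move: Nb Nc => /= /andP[_ Nb] /andP[_ Nc].
  have Eb : b' <> [::] by case: b' Hb' {Hw Hs Xc Nb Bal}.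
  have Ec : c' <> [::] by case: c' Hc' {Hw Hs Xr Nc Bal}.
  have Bal' := bal_tail Nb Eb Ec Nc Bal.
  have Hs' : size b' + size c' <= n by move: Hs => /=; lia.
  have [Hr Hc] := IHw _ _ _ Hs' Bal' Hw.
  split.
    case=> [|i] /= Hi.
      by rewrite X00 (sig_zero (f := fun j => x 0 j.+1)) ?addr0.
    by rewrite Xc // add0 Hr.
  case=> [|j] /= Hj.
    by rewrite X00 (sig_zero (f := fun i => x i.+1 0)) ?addr0.
  by rewrite Xr // add0 Hc.
- move=> Hs Nb Nc Bal.
  move: Nb Nc => /= /andP[_ Nb] /andP[_ Nc].
  have Eb : b' <> [::] by case: b' Hb' {Hw Hs Nb Bal}.
  have Ec : c' <> [::] by case: c' Hc' {Hw Hs Xr Nc Bal}.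
  have Bal' : sumK b' = sumK (a :: c').
    move: Bal => /=; rewrite -Ea -addA => /Hwc [//|[H|H]].
      by case: (sumK_nz Nb Eb).
    by case: (Hpos H) => _ /(sumK_nz Nc Ec).
  have Hs' : size b' + size (a :: c') <= n by move: Hs => /=; lia.
  have [Hr Hc] := IHw _ _ _ Hs' Bal' Hw.
  split.
    case=> [|i] /= Hi.
      by rewrite X00 (sig_zero (f := fun j => x 0 j.+1)) ?addr0.
    by have := Hr i Hi.
  case=> [|j] /= Hj.
    by rewrite X00 (Hc 0).
  by rewrite Xr // add0 (Hc j.+1).
- move=> Hs Nb Nc Bal.
  move: Nb Nc => /= /andP[_ Nb] /andP[_ Nc].
  have Eb : b' <> [::] by case: b' Hb' {Hw Hs Xc Nb Bal}.
  have Ec : c' <> [::] by case: c' Hc' {Hw Hs Nc Bal}.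
  have Bal' : sumK (a :: b') = sumK c'.
    move: Bal => /=; rewrite -Ea -addA => /Hwc [//|[H|H]].
      by case: (Hpos H) => _ /(sumK_nz Nb Eb).
    by case: (sumK_nz Nc Ec).
  have Hs' : size (a :: b') + size c' <= n by move: Hs => /=; lia.
  have [Hr Hc] := IHw _ _ _ Hs' Bal' Hw.
  split.
    case=> [|i] /= Hi.
      by rewrite X00 (Hr 0).
    by rewrite Xc // add0 (Hr i.+1).
  case=> [|j] /= Hj.
    by rewrite X00 (sig_zero (f := fun i => x i.+1 0)) ?addr0.
  by have := Hc j Hj.
Qed.

Lemma nwc_good b c x : sumK b = sumK c -> nwc add zero b c x -> good b c x.
Proof.
move=> Bal Hw; apply: (wd_good Hw) => x' Hx'.
apply: (core_good (n := size (filter nz b) + size (filter nz c))) Hx' => //.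
- exact: filter_all.
- exact: filter_all.
- by rewrite !sumK_filter.
Qed.

Lemma wd_exists P b c : (exists x', P (filter nz b) (filter nz c) x') ->
  exists x, with_deletion zero P b c x.
Proof.
case=> x' Hx'.
exists (fun i j => if nz (nth zero b i) && nz (nth zero c j)
  then x' (count nz (take i b)) (count nz (take j c)) else zero).
by exists x'; split.
Qed.

Lemma core_exists n b c : size b + size c <= n -> all nz b -> all nz c ->
  sumK b = sumK c -> exists x, nwc_core add zero b c x.
Proof.
elim: n b c => [|n IH] b c Hs Nb Nc Bal.
  case: b c Hs {Nb Nc Bal} => [|? ?] [|? ?] // _.
  by exists (fun _ _ => zero); constructor.
have IHw : forall b c, size b + size c <= n -> sumK b = sumK c ->
    exists x, with_deletion zero (nwc_core add zero) b c x.
  move=> b0 c0 Hs0 Bal0; apply: wd_exists; apply: IH.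
  - rewrite !size_filter; apply: leq_trans Hs0.
    by apply: leq_add; apply: count_size.
  - exact: filter_all.
  - exact: filter_all.
  - by rewrite !sumK_filter.
case: b Hs Nb Bal => [|b1 [|b2 b'']] Hs Nb Bal.
- case: c Hs Nc Bal => [|c1 c'] Hs Nc Bal.
    by exists (fun _ _ => zero); constructor.
  by case: (sumK_nz Nc _ (esym Bal)).
- by exists (fun _ j => nth zero c j); apply: nwc_row.
case: c Hs Nc Bal => [|c1 [|c2 c'']] Hs Nc Bal.
- by case: (sumK_nz Nb _ Bal).
- by exists (fun i _ => nth zero [:: b1, b2 & b''] i); apply: nwc_col.
have {}Nb : all nz (b2 :: b'') by case/andP: Nb.
have {}Nc : all nz (c2 :: c'') by case/andP: Nc.
have Eb : b2 :: b'' <> [::] by [].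
have Ec : c2 :: c'' <> [::] by [].
have [E|Ne] := EM (b1 = c1).
  subst c1.
  have Bal' := bal_tail Nb Eb Ec Nc Bal.
  have Hs' : size (b2 :: b'') + size (c2 :: c'') <= n by move: Hs => /=; lia.
  have [y Hy] := IHw _ _ Hs' Bal'.
  exists (fun i j => match i, j with 0, 0 => b1 | 0, _.+1 => zero
    | _.+1, 0 => zero | i.+1, j.+1 => y i j end).
  by apply: nwc_eq.
have [[a Ea]|Nle] := EM (canon_le add b1 c1).
  have Bal' : sumK (b2 :: b'') = sumK (a :: c2 :: c'').
    move: Bal => /=; rewrite -Ea -addA => /Hwc [//|[H|H]].
      by case: (sumK_nz Nb Eb).
    by case: (Hpos H) => _ /(sumK_nz Nc Ec).
  have Hs' : size (b2 :: b'') + size (a :: c2 :: c'') <= n by move: Hs => /=; lia.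
  have [y Hy] := IHw _ _ Hs' Bal'.
  exists (fun i j => match i with 0 => (match j with 0 => b1 | _ => zero end)
    | i.+1 => y i j end).
  by apply: (nwc_le (a := a)).
have [//|[a Ea]] := Htot b1 c1.
have Bal' : sumK (a :: b2 :: b'') = sumK (c2 :: c'').
  move: Bal => /=; rewrite -Ea -addA => /Hwc [//|[H|H]].
    by case: (Hpos H) => _ /(sumK_nz Nb Eb).
  by case: (sumK_nz Nc Ec).
have Hs' : size (a :: b2 :: b'') + size (c2 :: c'') <= n by move: Hs => /=; lia.
have [y Hy] := IHw _ _ Hs' Bal'.
exists (fun i j => match j with 0 => (match i with 0 => c1 | _ => zero end)
  | j.+1 => y i j end).
by apply: (nwc_ge (a := a)).
Qed.

Lemma nwc_exists b c : sumK b = sumK c -> exists x, nwc add zero b c x.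
Proof.
move=> Bal; apply: wd_exists.
apply: (core_exists (n := size (filter nz b) + size (filter nz c))) => //.
- exact: filter_all.
- exact: filter_all.
- by rewrite !sumK_filter.
Qed.

Local Open Scope fset_scope.
Local Open Scope fmap_scope.

Lemma big_sumK (T : Type) (s : seq T) (P : pred T) (F : T -> K) :
  \big[add/zero]_(r <- s | P r) F r = sumK (map F (filter P s)).
Proof.
rewrite -big_filter; elim: (filter P s) => [|a l IH]; first by rewrite big_nil.
by rewrite big_cons IH.
Qed.

Variables (A V : choiceType) (X Y : {fset A}).
Variables (R : krel zero V X) (S : krel zero V Y).
Local Notation Z := (X `&` Y).

Lemma margE (D : {fset A}) (T : krel zero V D) Z' t :
  marg add T Z' t = sumK (map T [seq r <- krel_supp T | r.[& Z'] == t]).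
Proof. by rewrite /marg big_sumK. Qed.

Lemma sum_us (D : {fset A}) (T : krel zero V D) w us : uniq us ->
  us =i [seq u <- krel_supp T | u.[& Z] == w] ->
  sumK (map T us) = marg add T Z w.
Proof.
move=> U E; rewrite margE; apply: sum_eq_uniq => //.
by apply: filter_uniq; apply: fset_uniq.
Qed.

Lemma cat_restrX (u v : {fmap A -> V}) : domf u = X -> domf v = Y ->
  u.[& Z] = v.[& Z] -> (u + v).[& X] = u.
Proof.
move=> Du Dv E; apply/fmapP => k; have kv : (k \in domf v) = (k \in Y) by rewrite Dv.
rewrite fnd_restrict fnd_cat kv.
case: (boolP (k \in X)) => kX; last first.
  by rewrite not_fnd //; rewrite -Du in kX.
case: (boolP (k \in Y)) => kY //.
have kZ : k \in Z by rewrite inE kX kY.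
by have := congr1 (fun f : {fmap A -> V} => f.[? k]) E; rewrite !fnd_restrict kZ.
Qed.

Lemma cat_restrY (u v : {fmap A -> V}) : domf v = Y -> (u + v).[& Y] = v.
Proof.
move=> Dv; apply/fmapP => k; have kv : (k \in domf v) = (k \in Y) by rewrite Dv.
rewrite fnd_restrict fnd_cat kv.
by case: (boolP (k \in Y)) => kY //; rewrite not_fnd //; rewrite -Dv in kY.
Qed.

Lemma cat_restrZ (u v : {fmap A -> V}) : domf v = Y ->
  u.[& Z] = v.[& Z] -> (u + v).[& Z] = u.[& Z].
Proof.
move=> Dv E; apply/fmapP => k; have kv : (k \in domf v) = (k \in Y) by rewrite Dv.
rewrite !fnd_restrict fnd_cat kv.
case: (boolP (k \in Z)) => kZ //.
have kY : k \in Y by move: kZ; rewrite inE => /andP[].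
by rewrite kY; have := congr1 (fun f : {fmap A -> V} => f.[? k]) E; rewrite !fnd_restrict kZ.
Qed.

Lemma join_marg (Hbal : forall w, marg add R Z w = marg add S Z w)
  (W : krel zero V (X `|` Y)) : nw_join add R S W ->
  (forall t, marg add W X t = R t) /\ (forall t, marg add W Y t = S t).
Proof.
case=> us [vs [xs [H1 [H2 H3]]]].
have K1 : forall r, W r <> zero -> exists w i j,
    [/\ marg add R Z w <> zero, i < size (us w), j < size (vs w) &
        r = nth [fmap] (us w) i + nth [fmap] (vs w) j].
  by move=> r Hr; apply: contrapT => Hn; exact: Hr (H3 r Hn).
have MemU : forall w u, marg add R Z w <> zero -> u \in us w ->
    u \in krel_supp R /\ u.[& Z] = w.
  move=> w u Hw; have [_ _ E _ _] := H1 w Hw.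
  by rewrite E mem_filter => /andP[/eqP ? ?].
have MemV : forall w v, marg add R Z w <> zero -> v \in vs w ->
    v \in krel_supp S /\ v.[& Z] = w.
  move=> w v Hw; have [_ _ _ E _] := H1 w Hw.
  by rewrite E mem_filter => /andP[/eqP ? ?].
have Dec : forall r, W r <> zero -> exists w u v,
    [/\ marg add R Z w <> zero, u \in us w, v \in vs w,
        r = u + v & [/\ r.[& X] = u, r.[& Y] = v & u.[& Z] = w]] /\
    [/\ u \in krel_supp R, v \in krel_supp S & v.[& Z] = w].
  move=> r Hr; have [w [i [j [Hw Hi Hj Er]]]] := K1 r Hr.
  set u := nth [fmap] (us w) i in Er; set v := nth [fmap] (vs w) j in Er.
  have uU : u \in us w by apply: mem_nth.
  have vV : v \in vs w by apply: mem_nth.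
  have [uR uZ] := MemU w u Hw uU; have [vS vZ] := MemV w v Hw vV.
  exists w, u, v; split; split => //; rewrite Er; split => //.
  - by apply: cat_restrX; [apply: krel_dom uR|apply: krel_dom vS|rewrite uZ vZ].
  - by apply: cat_restrY; apply: krel_dom vS.
have suppW : forall r, W r <> zero -> r \in krel_supp W.
  by move=> r Hr; apply/(krel_suppP W r).
have Hsum : forall w, marg add R Z w <> zero ->
    sumK (map R (us w)) = sumK (map S (vs w)).
  move=> w Hw; have [Uu Uv Eu Ev _] := H1 w Hw.
  by rewrite (sum_us Uu Eu) (sum_us Uv Ev) Hbal.
split=> t; rewrite margE.
- case: (boolP (t \in krel_supp R)) => Ht; last first.
    have -> : R t = zero.
      by apply: contrapT => /(krel_suppP R t) H; rewrite H in Ht.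
    change zero with (sumK (map W [::])).
    apply: sum_eq_nz => //; first by apply: filter_uniq; apply: fset_uniq.
    move=> r Hr; rewrite mem_filter in_nil.
    apply/negbTE/negP => /andP[/eqP Er _].
    have [w [u [v [[Hw uU vV Ev [EX EY EZ]] [uR vS vZ]]]]] := Dec r Hr.
    by rewrite -Er EX uR in Ht.
  set w := t.[& Z].
  have Hw : marg add R Z w <> zero.
    rewrite margE => H0.
    have := sumK_eq0 H0 (x := t); rewrite mem_filter eqxx Ht => /(_ isT).
    by apply/(krel_suppP R t).
  have [Uu Uv Eu Ev Hn] := H1 w Hw.
  have [Hr _] := nwc_good (Hsum w Hw) Hn.
  have tu : t \in us w by rewrite Eu mem_filter eqxx Ht.
  have Hi0 : index t (us w) < size (us w) by rewrite index_mem.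
  have Nt : nth [fmap] (us w) (index t (us w)) = t by apply: nth_index.
  have Dt : domf t = X by apply: krel_dom Ht.
  have VZ : forall v, v \in vs w -> domf v = Y /\ t.[& Z] = v.[& Z].
    by move=> v Hv; have [vS vZ] := MemV w v Hw Hv; split; [apply: krel_dom vS|rewrite vZ].
  rewrite (sum_eq_nz (s2 := map (fun v => (t + v : {fmap A -> V})) (vs w))).
  + rewrite -map_comp -(sig_map [fmap]).
    rewrite (sig_ext (g := xs w (index t (us w)))); last first.
      by move=> j Hj /=; rewrite -{1}Nt H2.
    have := Hr (index t (us w)); rewrite !size_map => /(_ Hi0) ->.
    by rewrite (nth_map [fmap]) // Nt.
  + by apply: filter_uniq; apply: fset_uniq.
  + rewrite map_inj_in_uniq // => v1 v2 Hv1 Hv2 E.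
    have [D1 _] := VZ v1 Hv1; have [D2 _] := VZ v2 Hv2.
    by rewrite -(cat_restrY t D1) E cat_restrY.
  + move=> r Hr0; rewrite mem_filter; apply/idP/idP.
      move=> /andP[/eqP Er _].
      have [w' [u [v [[Hw' uU vV Erv [EX EY EZ]] [uR vS vZ]]]]] := Dec r Hr0.
      have Eut : u = t by rewrite -EX.
      have Ew : w' = w by rewrite -EZ Eut.
      rewrite Ew in vV; apply/mapP; exists v => //; by rewrite Erv Eut.
    move=> /mapP[v Hv Ev0]; rewrite (suppW r Hr0) andbT Ev0.
    by have [Dv Ez] := VZ v Hv; rewrite cat_restrX.
- case: (boolP (t \in krel_supp S)) => Ht; last first.
    have -> : S t = zero.
      by apply: contrapT => /(krel_suppP S t) H; rewrite H in Ht.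
    change zero with (sumK (map W [::])).
    apply: sum_eq_nz => //; first by apply: filter_uniq; apply: fset_uniq.
    move=> r Hr; rewrite mem_filter in_nil.
    apply/negbTE/negP => /andP[/eqP Er _].
    have [w [u [v [[Hw uU vV Ev [EX EY EZ]] [uR vS vZ]]]]] := Dec r Hr.
    by rewrite -Er EY vS in Ht.
  set w := t.[& Z].
  have Hw : marg add R Z w <> zero.
    rewrite Hbal margE => H0.
    have := sumK_eq0 H0 (x := t); rewrite mem_filter eqxx Ht => /(_ isT).
    by apply/(krel_suppP S t).
  have [Uu Uv Eu Ev Hn] := H1 w Hw.
  have [_ Hc] := nwc_good (Hsum w Hw) Hn.
  have tv : t \in vs w by rewrite Ev mem_filter eqxx Ht.
  have Hj0 : index t (vs w) < size (vs w) by rewrite index_mem.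
  have Nt : nth [fmap] (vs w) (index t (vs w)) = t by apply: nth_index.
  have Dt : domf t = Y by apply: krel_dom Ht.
  have UZ : forall u, u \in us w -> domf u = X /\ u.[& Z] = t.[& Z].
    by move=> u Hu; have [uR uZ] := MemU w u Hw Hu; split; [apply: krel_dom uR|rewrite uZ].
  rewrite (sum_eq_nz (s2 := map (fun u => (u + t : {fmap A -> V})) (us w))).
  + rewrite -map_comp -(sig_map [fmap]).
    rewrite (sig_ext (g := fun i => xs w i (index t (vs w)))); last first.
      by move=> i Hi /=; rewrite -{1}Nt H2.
    have := Hc (index t (vs w)); rewrite !size_map => /(_ Hj0) ->.
    by rewrite (nth_map [fmap]) // Nt.
  + by apply: filter_uniq; apply: fset_uniq.
  + rewrite map_inj_in_uniq // => u1 u2 Hu1 Hu2 E.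
    have [D1 Z1] := UZ u1 Hu1; have [D2 Z2] := UZ u2 Hu2.
    by rewrite -(cat_restrX D1 Dt Z1) E (cat_restrX D2 Dt Z2).
  + move=> r Hr0; rewrite mem_filter; apply/idP/idP.
      move=> /andP[/eqP Er _].
      have [w' [u [v [[Hw' uU vV Erv [EX EY EZ]] [uR vS vZ]]]]] := Dec r Hr0.
      have Evt : v = t by rewrite -EY.
      have Ew : w' = w by rewrite -vZ Evt.
      rewrite Ew in uU; apply/mapP; exists u => //; by rewrite Erv Evt.
    move=> /mapP[u Hu Eu']; rewrite (suppW r Hr0) andbT Eu'.
    by rewrite cat_restrY.
Qed.

Lemma part_exec (Hbal : forall w, marg add R Z w = marg add S Z w) w :
  marg add R Z w <> zero ->
  forall us vs : seq {fmap A -> V}, uniq us -> uniq vs ->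
    us =i [seq u <- krel_supp R | u.[& Z] == w] ->
    vs =i [seq v <- krel_supp S | v.[& Z] == w] ->
    exists x, nwc add zero [seq R u | u <- us] [seq S v | v <- vs] x.
Proof.
move=> _ us vs Uu Uv Eu Ev; apply: nwc_exists.
by rewrite (sum_us Uu Eu) (sum_us Uv Ev) Hbal.
Qed.

Lemma join_exists (Hbal : forall w, marg add R Z w = marg add S Z w) :
  exists W : krel zero V (X `|` Y), nw_join add R S W.
Proof.
pose us0 := fun w : {fmap A -> V} => [seq u <- krel_supp R | u.[& Z] == w].
pose vs0 := fun w : {fmap A -> V} => [seq v <- krel_supp S | v.[& Z] == w].
have U0 : forall w, uniq (us0 w) by move=> w; apply: filter_uniq; apply: fset_uniq.
have V0 : forall w, uniq (vs0 w) by move=> w; apply: filter_uniq; apply: fset_uniq.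
have Ex : forall w, exists x, nwc add zero (map R (us0 w)) (map S (vs0 w)) x.
  move=> w; apply: nwc_exists.
  by rewrite (sum_us (U0 w) (frefl _)) (sum_us (V0 w) (frefl _)) Hbal.
have [xs Hxs] := choice Ex.
pose cond (t : {fmap A -> V}) := [&& nz (marg add R Z t.[& Z]),
   t.[& X] \in us0 t.[& Z], t.[& Y] \in vs0 t.[& Z] & t == t.[& X] + t.[& Y]].
pose Wf (t : {fmap A -> V}) := if cond t then
   xs t.[& Z] (index t.[& X] (us0 t.[& Z])) (index t.[& Y] (vs0 t.[& Z])) else zero.
have WfP : forall t, Wf t <> zero -> cond t.
  by move=> t; rewrite /Wf; case: ifP.
pose supp := [fset t in [fset (u + v : {fmap A -> V}) | u in krel_supp R, v in krel_supp S]
   | nz (Wf t)].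
have suppP : forall t, t \in supp <-> Wf t <> zero.
  move=> t; rewrite !inE; split; first by case/andP => _ /nzP.
  move=> H; apply/andP; split; last by apply/nzP.
  have /and4P[_ Hu Hv /eqP Ht] := WfP t H.
  move: Hu Hv; rewrite !mem_filter => /andP[_ uR] /andP[_ vS].
  by apply/imfset2P; exists t.[& X] => //; exists t.[& Y].
have domP : forall t, t \in supp -> domf t = X `|` Y.
  move=> t /suppP /WfP /and4P[_ Hu Hv /eqP Ht].
  move: Hu Hv; rewrite !mem_filter => /andP[_ uR] /andP[_ vS].
  by rewrite Ht domf_cat (krel_dom uR) (krel_dom vS).
exists (@KRel K zero A V (X `|` Y) Wf supp suppP domP).
exists us0, vs0, xs; split; last split.
- by move=> w Hw; split.
- move=> w i j Hw Hi Hj /=.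
  set u := nth [fmap] (us0 w) i; set v := nth [fmap] (vs0 w) j.
  have uU : u \in us0 w by apply: mem_nth.
  have vV : v \in vs0 w by apply: mem_nth.
  have := uU; rewrite mem_filter => /andP[/eqP uZ uR].
  have := vV; rewrite mem_filter => /andP[/eqP vZ vS].
  have Du := krel_dom uR; have Dv := krel_dom vS.
  have EX : (u + v).[& X] = u by apply: cat_restrX; rewrite ?uZ ?vZ.
  have EY : (u + v).[& Y] = v by apply: cat_restrY.
  have EZ : (u + v).[& Z] = w by rewrite cat_restrZ ?uZ ?vZ.
  rewrite /Wf /cond EX EY EZ uU vV eqxx andbT.
  have -> : nz (marg add R Z w) by apply/nzP.
  by rewrite /= !index_uniq.
- move=> t Hn /=; rewrite /Wf; case: ifP => // /and4P[Hm Hu Hv /eqP Ht].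
  exfalso; apply: Hn.
  exists t.[& Z], (index t.[& X] (us0 t.[& Z])), (index t.[& Y] (vs0 t.[& Z])).
  split; first by apply/nzP.
  + by rewrite index_mem.
  + by rewrite index_mem.
  + by rewrite !nth_index.
Qed.

End Mon.

Local Open Scope fset_scope.
Local Open Scope fmap_scope.

Theorem proposition24 (K : Type) (add : K -> K -> K) (zero : K)
    (HK : comm_monoid add zero) (Hpos : positive_monoid add zero)
    (Hwc : weakly_cancellative add zero)
    (Htot : totally_canon_preordered add)
    (A V : choiceType) (X Y : {fset A})
    (R : krel zero V X) (S : krel zero V Y) :
  (forall w, marg add R (X `&` Y) w = marg add S (X `&` Y) w) ->
  (* the northwest corner procedure can be carried out: *)
  (forall w, marg add R (X `&` Y) w <> zero ->
     forall us vs : seq {fmap A -> V},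
       uniq us -> uniq vs ->
       us =i [seq u <- krel_supp R | u.[& X `&` Y] == w] ->
       vs =i [seq v <- krel_supp S | v.[& X `&` Y] == w] ->
       exists x, nwc add zero [seq R u | u <- us] [seq S v | v <- vs] x)
  /\ (exists W : krel zero V (X `|` Y), nw_join add R S W)
  (* every northwest corner join W satisfies W[X] = R and W[Y] = S: *)
  /\ (forall W : krel zero V (X `|` Y), nw_join add R S W ->
        (forall t, marg add W X t = R t) /\ (forall t, marg add W Y t = S t)).
Proof.
move=> Hbal; split; first by move=> w; exact: part_exec.
split; first exact: join_exists.
move=> W; exact: join_marg.
Qed.
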